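(* Let $r_1=(y_1,y_1'),\ r_2=(y_2,y_2')\in\mathbb{N}_0^n\times\mathbb{N}_0^n$ and $r_1\oplus r_2=(y,y')$. Then (i) $y'-y=(y_1'-y_1)+(y_2'-y_2)$; (ii) for every $x\in\mathbb{N}_0^n$: $x\ge y$ if and only if $x\ge y_1$ and $x+(y_1'-y_1)\ge y_2$; (iii) for every $x\in\mathbb{N}_0^n$: $x\ge y'$ if and only if $x\ge y_2'$ and $x+(y_2-y_2')\ge y_1'$. Conversely, if $\odot$ is any binary operation on $\mathbb{N}_0^n\times\mathbb{N}_0^n$ such that for all $r_1,r_2$, writing $r_1\odot r_2=(y,y')$, properties (i) and (ii) hold, or alternatively properties (i) and (iii) hold, then $\odot=\oplus$.
   Context: For $x,y\in\mathbb{Z}^n$, $x\le y$ means $x^i\le y^i$ for all $i$; $x\vee y$ is the componentwise maximum. For $r_1=(y_1,y_1'),\ r_2=(y_2,y_2')\in\mathbb{N}_0^n\times\mathbb{N}_0^n$ define $r_1\oplus r_2=(y,y')$ with $y=y_1+0\vee(y_2-y_1')$ and $y'=y_2'+0\vee(y_1'-y_2)$. *)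

(* Defs.v *)
From mathcomp Require Import all_boot all_order all_algebra.
Set Implicit Arguments. Unset Strict Implicit. Unset Printing Implicit Defensive.
Import Order.TTheory GRing.Theory Num.Theory.

Definition vec (n : nat) := {ffun 'I_n -> nat}.

Definition vle n (x y : vec n) : Prop := forall i : 'I_n, (x i <= y i)%N.

(* The operation r1 (+) r2 = (y1 + 0 v (y2 - y1'), y2' + 0 v (y1' - y2)).
   For naturals, 0 v (a - b) (max with 0 of the integer difference) is
   exactly truncated subtraction a - b. *)
Definition oplus n (r1 r2 : vec n * vec n) : vec n * vec n :=
  ([ffun i => r1.1 i + maxn 0 (r2.1 i - r1.2 i)],
   [ffun i => r2.2 i + maxn 0 (r1.2 i - r2.1 i)])%N.

Definition prop_i n (r1 r2 r : vec n * vec n) : Prop :=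
  forall i : 'I_n,
    ((r.2 i)%:Z - (r.1 i)%:Z
     = ((r1.2 i)%:Z - (r1.1 i)%:Z) + ((r2.2 i)%:Z - (r2.1 i)%:Z))%R.

Definition prop_ii n (r1 r2 r : vec n * vec n) : Prop :=
  forall x : vec n,
    vle r.1 x <->
    (vle r1.1 x /\
     forall i : 'I_n, ((r2.1 i)%:Z <= (x i)%:Z + ((r1.2 i)%:Z - (r1.1 i)%:Z))%R).

Definition prop_iii n (r1 r2 r : vec n * vec n) : Prop :=
  forall x : vec n,
    vle r.2 x <->
    (vle r2.2 x /\
     forall i : 'I_n, ((r1.2 i)%:Z <= (x i)%:Z + ((r2.1 i)%:Z - (r2.2 i)%:Z))%R).

(* Main.v *)
Require Import Defs.
From mathcomp Require Import all_boot all_order all_algebra.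
From mathcomp Require Import zify.
From Stdlib Require Import FunctionalExtensionality.
Import Order.TTheory GRing.Theory Num.Theory.

Lemma part_i n (r1 r2 : vec n * vec n) : prop_i r1 r2 (oplus r1 r2).
Proof. move=> i; rewrite /oplus /= !ffunE !max0n; lia. Qed.

Lemma part_ii n (r1 r2 : vec n * vec n) : prop_ii r1 r2 (oplus r1 r2).
Proof.
move=> x; split.
  move=> H; split.
    move=> i; have := H i; rewrite /= ffunE max0n; lia.
  move=> i; have := H i; rewrite /= ffunE max0n; lia.
move=> [H1 H2] i; have := H1 i; have := H2 i; rewrite /= ffunE max0n; lia.
Qed.

Lemma part_iii n (r1 r2 : vec n * vec n) : prop_iii r1 r2 (oplus r1 r2).
Proof.
move=> x; split.
  move=> H; split.
    move=> i; have := H i; rewrite /= ffunE max0n; lia.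
  move=> i; have := H i; rewrite /= ffunE max0n; lia.
move=> [H1 H2] i; have := H1 i; have := H2 i; rewrite /= ffunE max0n; lia.
Qed.

Lemma pair_eq (A B : Type) (p q : A * B) : p.1 = q.1 -> p.2 = q.2 -> p = q.
Proof. by case: p; case: q => ? ? ? ? /= -> ->. Qed.

Lemma vle_ext n (a b : vec n) : (forall x, vle a x <-> vle b x) -> a = b.
Proof.
move=> H; apply/ffunP => i.
have h1 : vle b a by apply/H => j.
have h2 : vle a b by apply/H => j.
move: (h1 i) (h2 i) => p q; apply/eqP; by rewrite eqn_leq q p.
Qed.

Lemma uniq_ii n (r1 r2 r : vec n * vec n) :
  prop_i r1 r2 r -> prop_ii r1 r2 r -> r = oplus r1 r2.
Proof.
move=> Hi Hii.
have e1 : r.1 = (oplus r1 r2).1.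
  apply: vle_ext => x; rewrite Hii part_ii; done.
have e2 : r.2 = (oplus r1 r2).2.
  apply/ffunP => i; have := Hi i; have := @part_i _ r1 r2 i.
  by rewrite e1 => A; rewrite -A => /addIr [->].
exact: (@pair_eq _ _ _ _ e1 e2).
Qed.

Lemma uniq_iii n (r1 r2 r : vec n * vec n) :
  prop_i r1 r2 r -> prop_iii r1 r2 r -> r = oplus r1 r2.
Proof.
move=> Hi Hii.
have e2 : r.2 = (oplus r1 r2).2.
  apply: vle_ext => x; rewrite Hii part_iii; done.
have e1 : r.1 = (oplus r1 r2).1.
  apply/ffunP => i; have := Hi i; have := @part_i _ r1 r2 i.
  rewrite e2; move: (r.1 i) ((oplus r1 r2).1 i) ((oplus r1 r2).2 i) (r1.1 i) (r1.2 i) (r2.1 i) (r2.2 i) => a b c d e f g; lia.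
exact: (@pair_eq _ _ _ _ e1 e2).
Qed.

Theorem proposition2p4 (n : nat) :
  (forall r1 r2 : vec n * vec n,
      prop_i r1 r2 (oplus r1 r2) /\ prop_ii r1 r2 (oplus r1 r2)
      /\ prop_iii r1 r2 (oplus r1 r2)) /\
  (forall odot : vec n * vec n -> vec n * vec n -> vec n * vec n,
      ((forall r1 r2, prop_i r1 r2 (odot r1 r2) /\ prop_ii r1 r2 (odot r1 r2)) \/
       (forall r1 r2, prop_i r1 r2 (odot r1 r2) /\ prop_iii r1 r2 (odot r1 r2))) ->
      odot = @oplus n).
Proof.
split.
  move=> r1 r2; split; [exact: part_i | split; [exact: part_ii | exact: part_iii]].
move=> odot [H|H]; apply: functional_extensionality => r1;
  apply: functional_extensionality => r2; have [H1 H2] := H r1 r2.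
  exact: uniq_ii.
exact: uniq_iii.
Qed.
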